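(* In the construction below, every $E^*\subseteq E$ with $|E^*| > st+2k$ satisfies $\alpha(E^* ) < A$; in particular, no such $E^*$ is an admissible solution of the constructed CSCN instance.
   Context: Let $G'=(V',E')$ be a connected undirected graph, let $S=\{u_1,\dots,u_s\}\subseteq V'$ with $s=|S|$, and let $k\ge 0$ be a real number with $|E'|\ge 2k$. Let $t\ge 1$ be an integer. Let $V = V'\cup\{v_{i,j} : 1\le i\le s,\ 1\le j\le t\}$ (the $v_{i,j}$ are new vertices) and let $E$ be the set of all pairs of vertices of $V$ (edges undirected). Define $w^*:E\to\mathbb{R}$ by: $w^*(\{v_{i,j},u_i\})=1$ for all $i,j$; $w^*(\{v_{i,j},u\})=0$ for every $u\in V\setminus\{u_i\}$; $w^*(e)=\frac12$ for every $e\in E'$; $w^*(\{u,u'\})=0$ for $u,u'\in V'$ with $\{u,u'\}\notin E'$. Set $A=\frac{st+k}{st+2k}$ and $B=\frac{\frac12(|E'|-2k)}{st+2k}$. For nonempty $E^*\subseteq E$ let $\alpha(E^* )=\frac{\sum_{e\in E^*}w^*(e)}{|E^*|}$ and $\beta(E^* )=\frac{\sum_{e\in E\setminus E^*}w^*(e)}{|E^*|}$. The graph induced by $E^*$ has vertex set the vertices incident to some edge of $E^*$ and edge set $E^*$. An admissible solution of the constructed CSCN instance is a nonempty $E^*\subseteq E$ whose induced graph is connected and which satisfies $\alpha(E^* )\ge A$ and $\beta(E^* )\le B$. *)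

(* Defs.v *)
From HB Require Import structures.
From mathcomp Require Import all_boot all_order all_algebra.
Set Implicit Arguments. Unset Strict Implicit. Unset Printing Implicit Defensive.
Import Order.TTheory GRing.Theory Num.Theory.
Local Open Scope ring_scope.

Section Construction.
Variables (V' : finType) (e : rel V') (S : {set V'}) (t : nat).

Definition simple_graph := symmetric e /\ irreflexive e.
Definition graph_connected := forall x y : V', connect e x y.

Definition Eprime : {set {set V'}} := [set [set x; y] | x in V', y in V' & e x y].

(* Index i of u_i ranges over S; the new vertex v_{i,j} is inr (i, j). *)
Definition Sidx := {x : V' | x \in S}.
Definition Vt := (V' + (Sidx * 'I_t))%type.

Definition Eall : {set {set Vt}} := [set P : {set Vt} | #|P| == 2%N].

Variable R : realFieldType.

Definition wstar (P : {set Vt}) : R :=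
  if [exists i : Sidx, exists j : 'I_t, P == [set (inr (i, j) : Vt); inl (val i)]]
  then 1
  else if [exists x : V', exists y : V', (P == [set (inl x : Vt); inl y]) && e x y]
  then 1 / 2
  else 0.

Definition alpha (Es : {set {set Vt}}) : R :=
  (\sum_(P in Es) wstar P) / #|Es|%:R.

Definition beta (Es : {set {set Vt}}) : R :=
  (\sum_(P in Eall :\: Es) wstar P) / #|Es|%:R.

Definition incident (Es : {set {set Vt}}) (x : Vt) : bool :=
  [exists P in Es, x \in P].
Definition induced_adj (Es : {set {set Vt}}) : rel Vt :=
  fun x y => (x != y) && ([set x; y] \in Es).
Definition induced_connected (Es : {set {set Vt}}) :=
  forall x y, incident Es x -> incident Es y -> connect (induced_adj Es) x y.

Definition Aconst (k : R) : R :=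
  ((#|S| * t)%:R + k) / ((#|S| * t)%:R + 2 * k).
Definition Bconst (k : R) : R :=
  (1 / 2 * (#|Eprime|%:R - 2 * k)) / ((#|S| * t)%:R + 2 * k).

Definition admissible (k : R) (Es : {set {set Vt}}) :=
  [/\ Es != set0, Es \subset Eall, induced_connected Es,
      Aconst k <= alpha Es & beta Es <= Bconst k].

End Construction.

(* Main.v *)
Require Import Defs.
From HB Require Import structures.
From mathcomp Require Import all_boot all_order all_algebra.
From mathcomp Require Import lra.
Import Order.TTheory GRing.Theory Num.Theory.
Local Open Scope ring_scope.

Theorem lemma2 (R : realFieldType) (V' : finType) (e : rel V') (S : {set V'})
    (t : nat) (k : R) :
  simple_graph e -> graph_connected e ->
  S != set0 ->
  0 <= k -> 2 * k <= #|Eprime e|%:R ->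
  (0 < t)%N ->
  forall Es : {set {set Vt S t}}, Es \subset Eall S t ->
    (#|S| * t)%:R + 2 * k < #|Es|%:R ->
    alpha e R Es < Aconst S t k /\ ~ admissible e k Es.
Proof.
move=> _ _ S0 k0 _ t0 Es _ Hm.
set F : {set {set Vt S t}} :=
  [set [set (inr p : Vt S t); inl (val p.1)] | p : Sidx S * 'I_t].
have cF : (#|F| <= #|S| * t)%N.
  apply: leq_trans (leq_imset_card _ _) _.
  by rewrite ?cardsT card_prod card_ord card_sig.
have wle : forall P, wstar e R P <= 1/2 + (P \in F)%:R / 2.
  move=> P; rewrite /wstar.
  case: ifP => [/existsP [i /existsP [j /eqP ->]]|_].
    have -> : [set (inr (i, j) : Vt S t); inl (val i)] \in F.
      by apply/imsetP; exists (i, j).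
    by rewrite /=; lra.
  case: ifP => _; have := ler0n R (P \in F); lra.
have Hsum : \sum_(P in Es) wstar e R P <= #|Es|%:R / 2 + (#|S| * t)%:R / 2.
  apply: le_trans (ler_sum _ (fun P _ => wle P)) _.
  rewrite big_split /= sumr_const -mulr_suml.
  have : \sum_(P in Es) ((P \in F)%:R : R) <= #|F|%:R.
    have -> : (#|F|%:R : R) = \sum_(P in F) (1 : R) by rewrite sumr_const.
    rewrite big_mkcond [X in _ <= X]big_mkcond /=.
    apply: ler_sum => P _; case: (P \in Es); case: (P \in F) => //=.
  have : (#|F|%:R : R) <= (#|S| * t)%:R by rewrite ler_nat.
  rewrite -mulr_natr; lra.
have s1 : 1 <= ((#|S| * t)%:R : R).
  by rewrite ler1n muln_gt0 t0 andbT card_gt0.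
have Hlt : alpha e R Es < Aconst S t k.
  rewrite /alpha /Aconst.
  set W := \sum_(P in Es) wstar e R P in Hsum *.
  set m := (#|Es|%:R : R) in Hsum Hm *.
  set s := ((#|S| * t)%:R : R) in Hsum Hm s1 *.
  have mp : 0 < m by lra.
  have Dp : 0 < s + 2 * k by lra.
  rewrite ltr_pdivrMr // mulrAC ltr_pdivlMr //.
  have h1 : W * (s + 2 * k) <= (m / 2 + s / 2) * (s + 2 * k).
    by rewrite ler_pM2r.
  nra.
split=> // -[_ _ _ Ha _].
by move: Hlt; rewrite ltNge Ha.
Qed.
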